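(* Let $G$ and $H$ be graphs and $d\ge 0$ such that every vertex $v\in V(H)$ has degree at most $d$ in $H$ and degree at most $d$ in $G$. If there is a collection $\mathcal{F}$ of at least $4d+1$ linear forests covering the edges of $G$, then there is a collection of $|\mathcal{F}|$ linear forests covering the edges of $G\cup H$.
   Context: A linear forest is a graph which is a vertex-disjoint union of paths. A collection of graphs covers the edges of a graph if every edge lies in at least one graph of the collection. *)

(* Defs.v *)
From mathcomp Require Import all_boot.
Set Implicit Arguments. Unset Strict Implicit. Unset Printing Implicit Defensive.

Definition simple_graph (T : finType) (E : rel T) : Prop :=
  (forall x y, E x y = E y x) /\ (forall x, ~~ E x x).

Definition deg (T : finType) (E : rel T) (v : T) : nat := #|[set y | E v y]|.

Definition path_adj (T : finType) (p : seq T) (x y : T) : bool :=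
  ((x, y) \in zip p (behead p)) || ((y, x) \in zip p (behead p)).

(* Vertices of T not on any listed path are isolated (trivial paths). *)
Definition linear_forest (T : finType) (F : rel T) : Prop :=
  exists ps : seq (seq T),
    uniq (flatten ps) /\
    (forall x y, F x y <-> exists2 p, p \in ps & path_adj p x y).

Definition covers (T : finType) (k : nat) (fs : 'I_k -> rel T) (E : rel T) : Prop :=
  forall x y, E x y -> exists i, fs i x y.

Definition graph_union (T : finType) (G H : rel T) : rel T :=
  [rel x y | G x y || H x y].

(* Main.v *)
Require Import Defs.
From mathcomp Require Import all_boot zify.
Set Implicit Arguments. Unset Strict Implicit. Unset Printing Implicit Defensive.

Fixpoint adjs (T : eqType) (p : seq T) (x y : T) : bool :=
  match p with
  | a :: t => (match t with b :: _ => (a == x) && (b == y) | [::] => false end) || adjs t x y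
  | [::] => false
  end.

Lemma zip_adjs (T : eqType) (p : seq T) x y : ((x, y) \in zip p (behead p)) = adjs p x y.
Proof.
elim: p => [|a t IH] //=.
case: t IH => [|b t'] IH //=.
by rewrite in_cons IH /= xpair_eqE (eq_sym x) (eq_sym y).
Qed.

Lemma path_adjE (T : finType) (p : seq T) x y : path_adj p x y = adjs p x y || adjs p y x.
Proof. by rewrite /path_adj !zip_adjs. Qed.

Lemma lf_sym (T : finType) (F : rel T) : linear_forest F -> forall x y, F x y = F y x.
Proof.
move=> [ps [_ HF]] x y.
apply/idP/idP => /HF [p Hp Ha]; apply/HF; exists p => //;
  by move: Ha; rewrite !path_adjE orbC.
Qed.

Fixpoint cutp (T : eqType) (keep : rel T) (x : T) (s : seq T) : seq (seq T) :=
  match s with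
  | [::] => [:: [:: x]]
  | y :: s' => let r := cutp keep y s' in
     if keep x y then (x :: head [::] r) :: behead r else [:: x] :: r
  end.

Lemma flatten_cutp (T : eqType) keep (x : T) s : flatten (cutp keep x s) = x :: s.
Proof.
elim: s x => [|y s IH] x //=.
have E : flatten (cutp keep y s) = head [::] (cutp keep y s) ++ flatten (behead (cutp keep y s)).
  by case: (cutp keep y s).
case: (keep x y) => /=; by rewrite -?E IH.
Qed.

Lemma cutp_head (T : eqType) keep (x : T) s : exists q r, cutp keep x s = (x :: q) :: r.
Proof.
case: s => [|y s] /=; first by exists [::], [::].
case: (keep x y); last by exists [::]; eexists.
by do 2 eexists.
Qed.

Lemma adj_cutp (T : eqType) keep (x : T) s a b :
  has (fun q => adjs q a b) (cutp keep x s) = adjs (x :: s) a b && keep a b.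
Proof.
elim: s x => [|y s IH] x /=; first by [].
have [q [r' E]] := cutp_head keep y s.
have IH' := IH y; rewrite E /= in IH'.
case Kxy: (keep x y); rewrite E /=.
  case: (boolP ((x == a) && (y == b))) => [/andP [/eqP ? /eqP ?]|_]; subst.
    by rewrite Kxy.
  by rewrite /=; exact: IH'.
rewrite IH' /=.
case: (boolP ((x == a) && (y == b))) => [/andP [/eqP ? /eqP ?]|_]; subst.
  by rewrite Kxy !andbF.
by [].
Qed.

Definition cutq (T : eqType) keep (p : seq T) :=
  match p with [::] => [::] | x :: s => cutp keep x s end.

Lemma flatten_cutq (T : eqType) keep (p : seq T) : flatten (cutq keep p) = p.
Proof. by case: p => //= x s; rewrite flatten_cutp. Qed.

Lemma adj_cutq (T : eqType) keep (p : seq T) a b :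
  has (fun q => adjs q a b) (cutq keep p) = adjs p a b && keep a b.
Proof. by case: p => //= x s; rewrite adj_cutp. Qed.

Lemma flatten_flatten_map (T U : Type) (f : U -> seq (seq T)) (ps : seq U) :
  flatten (flatten (map f ps)) = flatten (map (fun p => flatten (f p)) ps).
Proof. by elim: ps => //= p ps IH; rewrite flatten_cat IH. Qed.

Lemma lf_restrict (T : finType) (F F' keep : rel T) :
  linear_forest F -> (forall x y, keep x y = keep y x) ->
  (forall x y, F' x y = F x y && keep x y) -> linear_forest F'.
Proof.
move=> [ps [Hu HF]] Ks HF'.
exists (flatten (map (cutq keep) ps)); split.
  rewrite flatten_flatten_map.
  suff -> : [seq flatten (cutq keep p) | p <- ps] = ps by [].
  by rewrite (eq_map (@flatten_cutq _ keep)) map_id.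
move=> x y; rewrite HF'; split.
move=> /andP [/HF [p Hp] + Kxy].
rewrite path_adjE => /orP [] Ha.
  have : has (fun q => adjs q x y) (cutq keep p) by rewrite adj_cutq Ha Kxy.
  move=> /hasP [q Hq Hq']; exists q; last by rewrite path_adjE Hq'.
  by apply/flattenP; exists (cutq keep p) => //; apply/mapP; exists p.
have : has (fun q => adjs q y x) (cutq keep p) by rewrite adj_cutq Ha Ks Kxy.
move=> /hasP [q Hq Hq']; exists q; last by rewrite path_adjE Hq' orbT.
by apply/flattenP; exists (cutq keep p) => //; apply/mapP; exists p.
  move=> [q /flattenP [qs /mapP [p Hp ->] Hq]].
  rewrite path_adjE => /orP [] Ha.
    have : has (fun q => adjs q x y) (cutq keep p) by apply/hasP; exists q.
    rewrite adj_cutq => /andP [Hp1 ->]; rewrite andbT; apply/HF.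
    by exists p => //; rewrite path_adjE Hp1.
  have : has (fun q => adjs q y x) (cutq keep p) by apply/hasP; exists q.
  rewrite adj_cutq Ks => /andP [Hp1 ->]; rewrite andbT; apply/HF.
  by exists p => //; rewrite path_adjE Hp1 orbT.
Qed.

Lemma adjs_size (T : eqType) (p : seq T) x y : adjs p x y -> 1 < size p.
Proof.
elim: p => [|a t IH] //=.
case: t IH => [|b t] IH //=.
Qed.

Lemma mem_adjs (T : eqType) (p : seq T) u : u \in p -> 1 < size p ->
  exists z, adjs p u z || adjs p z u.
Proof.
elim: p => [|a t IH] //=.
case: t IH => [|b t] IH //= Hu _.
rewrite in_cons in Hu; case/orP: Hu => [/eqP ->|Hu].
  by exists b; rewrite !eqxx.
case: t IH Hu => [|c t] IH Hu.
  rewrite mem_seq1 in Hu; move/eqP: Hu => ->.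
  by exists a; rewrite !eqxx /= orbT.
have [z Hz] := IH Hu isT.
by exists z; move: Hz => /= /orP [] ->; rewrite !orbT.
Qed.

Lemma subseq_flatten_filter (T : eqType) (P : pred (seq T)) ps :
  subseq (flatten (filter P ps)) (flatten ps).
Proof.
elim: ps => //= q ps IH.
case: (P q) => /=.
  by rewrite cat_subseq ?subseq_refl.
apply: subseq_trans IH _; exact: suffix_subseq.
Qed.

Lemma lf_add (T : finType) (F F' : rel T) u v :
  linear_forest F -> u != v -> (forall y, ~~ F u y) -> (forall y, ~~ F v y) ->
  (forall x y, F' x y = F x y || ((x == u) && (y == v)) || ((x == v) && (y == u))) ->
  linear_forest F'.
Proof.
move=> [ps [Hu HF]] Nuv Iu Iv HF'.
have Hnot : forall w p, (forall y, ~~ F w y) -> p \in ps -> w \in p -> forall x y, ~~ path_adj p x y.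
  move=> w p Iw Hp Hw x y; apply/negP => Ha.
  have Hs : 1 < size p by move: Ha; rewrite path_adjE => /orP [] /adjs_size.
  have [z Hz] := mem_adjs Hw Hs.
  have : F w z by apply/HF; exists p => //; rewrite path_adjE.
  by rewrite (negbTE (Iw z)).
set P := fun q : seq T => (u \notin q) && (v \notin q).
exists ([:: u; v] :: filter P ps); split.
  have NF : forall w, (w == u) || (w == v) -> w \notin flatten (filter P ps).
    move=> w Hw; apply/negP => /flattenP [q]; rewrite mem_filter => /andP [/andP [Hu1 Hv1] _] H1.
    by case/orP: Hw => /eqP Ew; subst w; [rewrite H1 in Hu1 | rewrite H1 in Hv1].
  rewrite /= in_cons negb_or Nuv NF ?eqxx // NF ?eqxx ?orbT //=.
  exact: (subseq_uniq (subseq_flatten_filter P ps) Hu).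
move=> x y; rewrite HF'; split.
  case/orP => [/orP [Fxy|/andP [/eqP -> /eqP ->]]|/andP [/eqP -> /eqP ->]].
  - have [p Hp Ha] := (HF x y).1 Fxy.
    exists p => //; rewrite in_cons mem_filter Hp andbT; apply/orP; right.
    apply/andP; split; apply/negP => Hw.
      by have := Hnot u p Iu Hp Hw x y; rewrite Ha.
    by have := Hnot v p Iv Hp Hw x y; rewrite Ha.
  - by exists [:: u; v]; rewrite ?mem_head // path_adjE /= !eqxx.
  - by exists [:: u; v]; rewrite ?mem_head // path_adjE /= !eqxx orbT.
move=> [q]; rewrite in_cons => /orP [/eqP ->|].
  rewrite path_adjE /= !orbF => /orP [] /andP [/eqP <- /eqP <-]; rewrite !eqxx ?orbT //.
rewrite mem_filter => /andP [_ Hq] Ha.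
by have -> : F x y by apply/HF; exists q.
Qed.

Lemma count_nonisol (T : finType) k (F : 'I_k -> rel T) (N : pred T) w :
  (forall j y, F j w y -> N y) -> (forall i j y, F i w y -> F j w y -> i = j) ->
  #|[set j | [exists y, F j w y]]| <= #|[set y | N y]|.
Proof.
move=> HN Hd.
pose f j := odflt w [pick y | F j w y].
have Hf : forall j, j \in [set j | [exists y, F j w y]] -> F j w (f j).
  move=> j; rewrite inE => /existsP [y Hy]; rewrite /f.
  by case: pickP => [z ->|/(_ y)]; rewrite ?Hy.
rewrite -(card_in_imset (f := f)).
  apply: subset_leq_card; apply/subsetP => y /imsetP [j Hj ->].
  by rewrite inE; apply: HN (Hf j Hj).
move=> i j Hi Hj E; apply: (Hd i j (f i)) (Hf i Hi) _.
by rewrite E; apply: Hf.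
Qed.

Definition symL (T : eqType) (L : seq (T * T)) x y := ((x, y) \in L) || ((y, x) \in L).

Definition inv2 (T : finType) k (G : rel T) L (fs2 : 'I_k -> rel T) :=
  [/\ (forall i, linear_forest (fs2 i)),
      (forall i x y, fs2 i x y -> G x y || symL L x y),
      (forall i j x y, fs2 i x y -> fs2 j x y -> i = j) &
      (forall x y, G x y || symL L x y -> exists i, fs2 i x y)].

Lemma step2 (T : finType) (G H : rel T) (VH : {set T}) (d k : nat)
  (fs1 : 'I_k -> rel T) :
  simple_graph G -> simple_graph H ->
  (forall x y, H x y -> (x \in VH) && (y \in VH)) ->
  (forall v, v \in VH -> deg H v <= d /\ deg G v <= d) ->
  4 * d + 1 <= k ->
  inv2 G [::] fs1 ->
  forall L, all (fun e => H e.1 e.2) L -> exists fs2 : 'I_k -> rel T, inv2 G L fs2.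
Proof.
move=> [Gs Gi] [Hs Hi] HV Hdeg Hk Hinit.
elim=> [|[u v] L IH]; first by move=> _; exists fs1.
rewrite /= => /andP [Huv HL].
have [fs2 [Hlf Hsub Hdis Hcov]] := IH HL.
have symL_cons : forall x y, symL ((u, v) :: L) x y =
   [|| ((x == u) && (y == v)), ((x == v) && (y == u)) | symL L x y].
  move=> x y; rewrite /symL !in_cons !xpair_eqE.
  rewrite [(y == u) && _]andbC.
  by case: ((x, y) \in L); case: ((y, x) \in L); rewrite ?orbT ?orbF.
have sym2 : forall i x y, fs2 i x y = fs2 i y x by move=> i; apply: lf_sym.
case: (boolP [exists i, fs2 i u v]) => [/existsP [i0 Hi0]|Hnc].
  exists fs2; split => //.
    move=> i x y /Hsub; rewrite symL_cons => /orP [->|->] //; by rewrite !orbT.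
  move=> x y; rewrite symL_cons => /orP [Gxy|/orP [/andP [/eqP -> /eqP ->]|/orP [/andP [/eqP -> /eqP ->]|H2]]].
  - by apply: Hcov; rewrite Gxy.
  - by exists i0.
  - by exists i0; rewrite sym2.
  - by apply: Hcov; rewrite H2 orbT.
have Nc : forall i, ~~ fs2 i u v by move=> i; apply/negP => Hf; move/existsP: Hnc; apply; exists i.
have Nuv : u != v by apply/negP => /eqP E; subst v; move: (Hi u); rewrite Huv.
have Bound : forall w w', H w w' -> ~~ (G w w' || symL L w w') ->
    #|[set j | [exists y, fs2 j w y]]| <= (d + d).-1.
  move=> w w' Hww Nww.
  have HwV : w \in VH by case/andP: (HV _ _ Hww).
  have [dH dG] := Hdeg w HwV.
  apply: leq_trans (count_nonisol (N := fun y => G w y || symL L w y) _ _) _.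
  - by move=> j y /Hsub.
  - move=> i j y Ha Hb; exact: Hdis Ha Hb.
  apply: (@leq_trans #|[set y | G w y] :|: ([set y | H w y] :\ w')|).
    apply: subset_leq_card; apply/subsetP => y; rewrite !inE.
    case/orP => [->//|HyL]; apply/orP; right.
    apply/andP; split.
      by apply/negP => /eqP E; subst y; move: Nww; rewrite HyL orbT.
    have : (all (fun e => H e.1 e.2) L) by [].
    move: HyL; rewrite /symL => /orP [] Hm /allP /(_ _ Hm) //=.
    by rewrite Hs.
  apply: leq_trans (leq_card_setU _ _) _.
  have Hin : w' \in [set y | H w y] by rewrite inE.
  have := cardsD1 w' [set y | H w y]; rewrite Hin.
  move: dH dG; rewrite /deg => dH dG E.
  lia.
have Bu : #|[set j | [exists y, fs2 j u y]]| <= (d + d).-1.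
  apply: (Bound u v Huv); apply/negP => /Hcov [i Hj]; by move: (Nc i); rewrite Hj.
have Bv : #|[set j | [exists y, fs2 j v y]]| <= (d + d).-1.
  apply: (Bound v u); first by rewrite Hs.
  apply/negP => /Hcov [i Hj]; by move: (Nc i); rewrite sym2 Hj.
set bad := [set j | [exists y, fs2 j u y]] :|: [set j | [exists y, fs2 j v y]].
have Bb : #|bad| < k.
  apply: leq_ltn_trans (leq_card_setU _ _) _; lia.
have : 0 < #|~: bad|.
  have := cardsC bad; rewrite card_ord; lia.
move=> /card_gt0P [i]; rewrite !inE negb_or => /andP [Iu Iv].
have Iu' : forall y, ~~ fs2 i u y by move=> y; apply/negP => Hy; move/negP: Iu; apply; apply/existsP; exists y.
have Iv' : forall y, ~~ fs2 i v y by move=> y; apply/negP => Hy; move/negP: Iv; apply; apply/existsP; exists y.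
pose fs3 := fun (j : 'I_k) (x y : T) =>
  if j == i then fs2 i x y || ((x == u) && (y == v)) || ((x == v) && (y == u)) else fs2 j x y.
exists fs3; split.
- move=> j; rewrite /fs3; case: eqP => [_|_].
    by apply: (lf_add (F := fs2 i) (Hlf i) Nuv Iu' Iv').
  exact: Hlf.
- move=> j x y; rewrite /fs3 symL_cons; case: eqP => _.
    case/orP => [/orP [/Hsub /orP [->|->]|->]|->]; by rewrite ?orbT.
  by move/Hsub => /orP [->|->]; rewrite ?orbT.
- have key : forall j x y, fs3 j x y -> (fs2 j x y) \/ (j = i /\ ((x == u) && (y == v) || (x == v) && (y == u))).
    move=> j x y; rewrite /fs3; case: eqP => [->|_]; last by left.
    by case/orP => [/orP [->|H1]|H1]; [left | right; rewrite H1 | right; rewrite H1 orbT].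
  have uvnot : forall j x y, (x == u) && (y == v) || (x == v) && (y == u) -> ~~ fs2 j x y.
    move=> j x y /orP [] /andP [/eqP -> /eqP ->]; first exact: Nc.
    by rewrite sym2 Nc.
  move=> j j' x y K1 K2.
  case: (key j x y K1) => [A1|[E1 A1]]; case: (key j' x y K2) => [A2|[E2 A2]].
  + exact: Hdis A1 A2.
  + by move: (uvnot j x y A2); rewrite A1.
  + by move: (uvnot j' x y A1); rewrite A2.
  + by rewrite E1 E2.
- move=> x y; rewrite symL_cons.
  case/orP => [Gxy|/orP [E|/orP [E|E]]].
  + have [j Hj] := Hcov x y (introT orP (or_introl Gxy)).
    exists j; rewrite /fs3; case: eqP => [E0|//]; by rewrite -E0 Hj.
  + by exists i; rewrite /fs3 eqxx E orbT.
  + by exists i; rewrite /fs3 eqxx E !orbT.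
  + have [j Hj] := Hcov x y (introT orP (or_intror E)).
    exists j; rewrite /fs3; case: eqP => [E0|//]; by rewrite -E0 Hj.
Qed.

Theorem lemma3p1 (T : finType) (G H : rel T) (VH : {set T}) (d k : nat)
  (fs : 'I_k -> rel T) :
  simple_graph G -> simple_graph H ->
  (forall x y, H x y -> (x \in VH) && (y \in VH)) ->
  (forall v, v \in VH -> deg H v <= d /\ deg G v <= d) ->
  4 * d + 1 <= k ->
  (forall i, linear_forest (fs i)) ->
  covers fs G ->
  exists fs' : 'I_k -> rel T,
    (forall i, linear_forest (fs' i)) /\ covers fs' (graph_union G H).
Proof.
move=> SG SH HV Hdeg Hk Hlf Hcov.
have Gs := SG.1.
have fsym : forall i x y, fs i x y = fs i y x by move=> i; apply: lf_sym.
pose keep (i : 'I_k) := fun x y => G x y && [forall j : 'I_k, (j < i) ==> ~~ fs j x y].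
pose fs1 (i : 'I_k) := fun x y => fs i x y && keep i x y.
have I1 : inv2 G [::] fs1.
  split.
  - move=> i; apply: (lf_restrict (Hlf i) (keep := keep i)) => // x y.
    rewrite /keep Gs; congr andb; apply: eq_forallb => j; by rewrite fsym.
  - by move=> i x y /andP [_ /andP [-> _]].
  - move=> i j x y /andP [Fi /andP [_ Ai]] /andP [Fj /andP [_ Aj]].
    apply: val_inj; case: (ltngtP i j) => // Hlt.
      by move/forallP: Aj => /(_ i); rewrite Hlt Fi.
    by move/forallP: Ai => /(_ j); rewrite Hlt Fj.
  - move=> x y; rewrite /symL orbF => Gxy.
    have [i0 Hi0] := Hcov x y Gxy.
    case: (arg_minnP (P := fun i : 'I_k => fs i x y) (fun i : 'I_k => nat_of_ord i) Hi0) => i Hi Hmin.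
    exists i; rewrite /fs1 /keep Hi Gxy /=; apply/forallP => j; apply/implyP => Hj.
    apply/negP => Fj; have := Hmin j Fj; lia.
pose L := [seq e <- enum [pred _ : T * T | true] | H e.1 e.2].
have HL : all (fun e => H e.1 e.2) L by apply: filter_all.
have [fs2 [Hlf2 _ _ Hcov2]] := step2 SG SH HV Hdeg Hk I1 HL.
exists fs2; split => // x y /orP [Gxy|Hxy]; apply: Hcov2; first by rewrite Gxy.
by rewrite /symL mem_filter Hxy mem_enum orbT.
Qed.
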